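(* Let $\mathfrak g$ be a Lie algebra of matrices on which $(V,W)\mapsto\mathrm{Tr}(VW)$ is nondegenerate, fix $A\in\mathfrak g$ and $n\ge0$, and let $\mathcal M_A$, $P_0$, $P_1$ be as in the context. Let $F$ be a smooth function on $\mathcal M_A$ and, for a parameter $\lambda$, let $(\dot X_0,\dots,\dot X_n)=(P_1-\lambda P_0)\,dF$ be the Hamiltonian vector field of $F$ with respect to the pencil $P_1-\lambda P_0$. Then, identifying the pencil parameter $\lambda$ with the variable $\lambda$ in $X(\lambda)$, one has the identity of polynomials in $\lambda$ $$\sum_{i=0}^n\lambda^i\dot X_i=\Big[\frac{\partial F}{\partial X_0},X(\lambda)\Big].$$
   Context: $\mathcal M_A=\{X(\lambda)=\lambda^{n+1}A+\sum_{i=0}^n\lambda^iX_i\mid X_i\in\mathfrak g\}\cong\bigoplus_{i=0}^n\mathfrak g$. Tangent and cotangent spaces are identified with $\bigoplus_{i=0}^n\mathfrak g$ via the pairing $\langle(V_i),(W_i)\rangle=\sum_{i=0}^n\mathrm{Tr}(V_iW_i)$; for a function $F$, $dF=(\partial F/\partial X_0,\dots,\partial F/\partial X_n)$ with respect to this pairing. Put $X_{n+1}:=A$ and $X_m:=0$ for $m>n+1$. The Poisson tensors are: $P_0:(W_0,\dots,W_n)\mapsto(\dot X_0,\dots,\dot X_n)$ with $\dot X_i=\sum_{j=0}^{n-i}[X_{i+j+1},W_j]$; and $P_1:(W_0,\dots,W_n)\mapsto(\dot X_0,\dots,\dot X_n)$ with $\dot X_0=-[X_0,W_0]$ and $\dot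 X_i=\sum_{j=1}^{n+1-i}[X_{i+j},W_j]$ for $1\le i\le n$. *)

(* Defs.v *)
From HB Require Import structures.
From mathcomp Require Import all_boot all_order all_algebra.
From mathcomp Require Import all_classical all_reals all_analysis.
Set Implicit Arguments. Unset Strict Implicit. Unset Printing Implicit Defensive.
Import Order.TTheory GRing.Theory Num.Theory.
Local Open Scope ring_scope.

Section Pencil.
Variables (R : realType) (N n : nat).
Local Notation mat := 'M[R]_N.

Definition lieb (a b : mat) : mat := a *m b - b *m a.

Definition Xext (A : mat) (X : 'I_n.+1 -> mat) (m : nat) : mat :=
  if (m < n.+1)%N then X (inord m) else if m == n.+1 then A else 0.

Definition Wext (W : 'I_n.+1 -> mat) (m : nat) : mat :=
  if (m < n.+1)%N then W (inord m) else 0.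

Definition P0 (A : mat) (X W : 'I_n.+1 -> mat) (i : 'I_n.+1) : mat :=
  \sum_(0 <= j < (n - i).+1) lieb (Xext A X (i + j).+1) (Wext W j).

Definition P1 (A : mat) (X W : 'I_n.+1 -> mat) (i : 'I_n.+1) : mat :=
  if val i == 0%N then - lieb (X i) (W i)
  else \sum_(1 <= j < (n.+1 - i).+1) lieb (Xext A X (i + j)) (Wext W j).

Definition pairing (V W : 'I_n.+1 -> mat) : R := \sum_(i < n.+1) \tr (V i *m W i).

Definition Xpoly (A : mat) (X : 'I_n.+1 -> mat) (l : R) : mat :=
  l ^+ n.+1 *: A + \sum_(i < n.+1) l ^+ i *: X i.

Definition is_gradient (g : {vspace mat}) (F : ('I_n.+1 -> mat) -> R)
    (dF : ('I_n.+1 -> mat) -> ('I_n.+1 -> mat)) : Prop :=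
  forall X : 'I_n.+1 -> mat, (forall i, X i \in g) ->
    (forall i, dF X i \in g) /\
    forall V : 'I_n.+1 -> mat, (forall i, V i \in g) ->
      is_derive (0 : R) 1 (fun t : R => F (fun i => X i + t *: V i)) (pairing (dF X) V).

End Pencil.

(* Main.v *)
Require Import Defs.
From HB Require Import structures.
From mathcomp Require Import all_boot all_order all_algebra.
From mathcomp Require Import all_classical all_reals all_analysis.
Import Order.TTheory GRing.Theory Num.Theory.
Local Open Scope ring_scope.

Section S.
Variables (R : realType) (N n : nat) (A : 'M[R]_N) (X W : 'I_n.+1 -> 'M[R]_N).

Lemma liebDr a b c : lieb a (b + c) = lieb a b + lieb a c :> 'M[R]_N.
Proof. by rewrite /lieb mulmxDr mulmxDl opprD addrACA. Qed.
Lemma liebZr a k b : lieb a (k *: b) = k *: lieb a b :> 'M[R]_N.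
Proof. by rewrite /lieb scalerBr scalemxAr scalemxAl. Qed.
Lemma lieb0r a : lieb a 0 = 0 :> 'M[R]_N.
Proof. by rewrite /lieb mulmx0 mul0mx subrr. Qed.
Lemma liebC a b : lieb a b = - lieb b a :> 'M[R]_N.
Proof. by rewrite /lieb opprB. Qed.
Lemma liebsumr a (I : finType) (f : I -> 'M[R]_N) :
  lieb a (\sum_i f i) = \sum_i lieb a (f i).
Proof.
apply: (big_rec2 (fun x y => lieb a y = x)); first exact: lieb0r.
by move=> i x y _ <-; rewrite liebDr.
Qed.

Lemma keyP1 (i : 'I_n) : P1 A X W (lift ord0 i) =
  P0 A X W (widen_ord (leqnSn n) i) - lieb (Xext A X i.+1) (Wext W 0).
Proof.
rewrite /P1 /P0 /= /bump leq0n add1n subSS.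
rewrite [in RHS]big_nat_recl // addn0 addrAC subrr add0r big_add1 /=.
by apply: eq_bigr => j _; rewrite addSn.
Qed.

Lemma lastP0 : P0 A X W ord_max = lieb (Xext A X n.+1) (Wext W 0).
Proof. by rewrite /P0 /= subnn big_nat1 addn0. Qed.

Lemma XextE (i : 'I_n.+1) : X i = Xext A X i.
Proof. by rewrite /Xext ltn_ord inord_val. Qed.
Lemma WextE (i : 'I_n.+1) : W i = Wext W i.
Proof. by rewrite /Wext ltn_ord inord_val. Qed.

Lemma bump0 (i : nat) : bump 0 i = i.+1.
Proof. by rewrite /bump leq0n. Qed.

Lemma fin (V : zmodType) (a S T e : V) : -a + (S - T) - (S + e) = -e + (-a + -T).
Proof. by rewrite opprD addrACA -addrA !addrA addrNK [LHS]addrC addrA. Qed.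

Lemma mainlem (l : R) :
  \sum_(i < n.+1) l ^+ i *: (P1 A X W i - l *: P0 A X W i)
  = lieb (W ord0) (Xpoly A X l).
Proof.
under eq_bigr => i _ do rewrite scalerBr scalerA -exprSr.
rewrite sumrB big_ord_recl big_ord_recr /=.
under eq_bigr => i _ do rewrite keyP1 scalerBr.
rewrite sumrB lastP0 /P1 /= expr0 scale1r.
rewrite /Xpoly liebDr liebZr liebsumr big_ord_recl /= expr0 scale1r.
under [in RHS]eq_bigr => i _ do rewrite liebZr.
rewrite (liebC (W ord0) A) (liebC (W ord0) (X ord0)).
under [in RHS]eq_bigr => i _ do rewrite liebC XextE WextE /=.
rewrite (XextE ord0) (WextE ord0) /=.
have HA : Xext A X n.+1 = A by rewrite /Xext ltnn eqxx.
rewrite HA.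
rewrite (_ : bump 0 = S); last by apply: funext => i; rewrite bump0.
under [in RHS]eq_bigr => i _ do rewrite scalerN.
rewrite sumrN scalerN.
exact: fin.
Qed.
End S.

Theorem mainTheorem2 (R : realType) (N n : nat) (g : {vspace 'M[R]_N})
  (g_lie : forall a b, a \in g -> b \in g -> lieb a b \in g)
  (g_nondeg : forall a, a \in g -> (forall b, b \in g -> \tr (a *m b) = 0) -> a = 0)
  (A : 'M[R]_N) (HA : A \in g)
  (F : ('I_n.+1 -> 'M[R]_N) -> R) (dF : ('I_n.+1 -> 'M[R]_N) -> ('I_n.+1 -> 'M[R]_N))
  (HdF : is_gradient g F dF)
  (X : 'I_n.+1 -> 'M[R]_N) (HX : forall i, X i \in g) (l : R) :
  \sum_(i < n.+1) l ^+ i *: (P1 A X (dF X) i - l *: P0 A X (dF X) i)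
  = lieb (dF X ord0) (Xpoly A X l).
Proof. exact: mainlem. Qed.
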